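(* Let $n=p_1^{m_1}\cdots p_k^{m_k}$ be neither prime nor the square of a prime, and let $T=\prod_{i=1}^k(m_i+1)-2$ be the number of vertices of $\mathcal E_{\mathbb Z_n}$. Then $b(\mathcal E_{\mathbb Z_n})\le T$, with equality if and only if one of the following holds: (i) $k=1$ and $m_1>2$; (ii) $k=2$ and $m_1=m_2=1$; (iii) $k\ge2$ and $m_i>1$ for at least one $i$.
   Context: Primes $p_1<\dots<p_k$, positive integers $m_i$. The essential ideal graph $\mathcal E_{\mathbb Z_n}$ has vertices the nonzero proper ideals of $\mathbb Z_n$, with distinct $I,K$ adjacent iff $I+K$ is essential (meets every nonzero ideal nontrivially). For a graph $\Gamma$, $b(\Gamma)$ denotes the largest eigenvalue of its Laplacian matrix $D-A$. *)

(* Defs.v *)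
From HB Require Import structures.
From mathcomp Require Import all_boot all_order all_algebra.
From mathcomp Require Import polyrcf.
Set Implicit Arguments. Unset Strict Implicit. Unset Printing Implicit Defensive.
Import Order.TTheory GRing.Theory Num.Theory.
Local Open Scope ring_scope.

Definition is_ideal (n : nat) (I : {set 'Z_n}) : bool :=
  [&& 0 \in I,
      [forall x, forall y, (x \in I) && (y \in I) ==> (x - y \in I)] &
      [forall r, forall x, (x \in I) ==> (r * x \in I)]].

Definition zero_ideal (n : nat) : {set 'Z_n} := [set 0].

Definition ideal_sum (n : nat) (I K : {set 'Z_n}) : {set 'Z_n} :=
  [set x + y | x in I, y in K].

Definition essential (n : nat) (I : {set 'Z_n}) : bool :=
  [forall K : {set 'Z_n}, is_ideal K && (K != zero_ideal n) ==>
                           (I :&: K != zero_ideal n)].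

Definition EIG_vertices (n : nat) : {set {set 'Z_n}} :=
  [set I : {set 'Z_n} | [&& is_ideal I, I != zero_ideal n & I != setT]].

Definition EIG_adj (n : nat) (I K : {set 'Z_n}) : bool :=
  (I != K) && essential (ideal_sum I K).

Definition EIG_nv (n : nat) : nat := #|EIG_vertices n|.

Definition EIG_vertex (n : nat) (i : 'I_(EIG_nv n)) : {set 'Z_n} :=
  enum_val i.

Definition EIG_deg (n : nat) (I : {set 'Z_n}) : nat :=
  #|[set K in EIG_vertices n | EIG_adj I K]|.

Definition EIG_laplacian (R : nzRingType) (n : nat) : 'M[R]_(EIG_nv n) :=
  \matrix_(i, j) (if i == j then (EIG_deg (EIG_vertex i))%:R
                  else - (EIG_adj (EIG_vertex i) (EIG_vertex j))%:R).

(* Largest eigenvalue (the Laplacian is real symmetric, so its eigenvalues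
   are the real roots of its characteristic polynomial; they are all >= 0,
   so the default value 0 of the max is harmless). *)
Definition largest_eigenvalue (R : rcfType) (m : nat) (A : 'M[R]_m) : R :=
  \big[Num.max/0]_(a <- rootsR (char_poly A)) a.

Definition b_EIG (R : rcfType) (n : nat) : R :=
  largest_eigenvalue (EIG_laplacian R n).

(* Main.v *)
Require Import Defs.
From HB Require Import structures.
From mathcomp Require Import all_boot all_order all_algebra.
From mathcomp Require Import polyrcf.
From mathcomp Require Import zify ring lra.
Set Implicit Arguments. Unset Strict Implicit. Unset Printing Implicit Defensive.
Import Order.TTheory GRing.Theory Num.Theory.
Local Open Scope ring_scope.
Section Spec.
Variable (R : rcfType) (N : nat) (a : 'I_N -> 'I_N -> bool).
Hypothesis asym : forall i j, a i j = a j i.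
Hypothesis airr : forall i, a i i = false.

Definition gdeg i := #|[set j | a i j]|.
Definition Lap : 'M[R]_N :=
  \matrix_(i, j) (if i == j then (gdeg i)%:R else - (a i j)%:R).

Lemma degE i : (gdeg i)%:R = \sum_j (a i j)%:R :> R.
Proof.
rewrite /gdeg -sum1_card natr_sum big_mkcond /=; apply: eq_bigr => j _.
by rewrite inE; case: (a i j).
Qed.

Lemma LapE i j : Lap i j = (i == j)%:R * (gdeg i)%:R - (a i j)%:R.
Proof.
rewrite mxE; case: eqP => [->|_]; first by rewrite airr mul1r subr0.
by rewrite mul0r sub0r.
Qed.

Lemma Lap_sym i j : Lap i j = Lap j i.
Proof. by rewrite !mxE eq_sym asym; case: eqP => [->|]. Qed.

Lemma sum_delta (F : 'I_N -> R) j : \sum_i (i == j)%:R * F i = F j.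
Proof.
rewrite (bigD1 j) //= eqxx mul1r big1 ?addr0 // => i /negbTE ->; by rewrite mul0r.
Qed.

Lemma rowsum i : \sum_j Lap i j = 0.
Proof.
under eq_bigr do rewrite LapE.
rewrite sumrB -degE; under eq_bigr do rewrite eq_sym; rewrite (sum_delta (fun _ => (gdeg i)%:R)).
by rewrite subrr.
Qed.

Lemma colsum j : \sum_i Lap i j = 0.
Proof. under eq_bigr do rewrite Lap_sym; exact: rowsum. Qed.
Variable x : 'I_N -> R.
Let X2 := \sum_i x i ^+ 2.
Let S := \sum_i x i.
Let D := \sum_i (gdeg i)%:R * x i ^+ 2.
Let P := \sum_i \sum_j (a i j)%:R * (x i * x j).

Lemma e1 : \sum_i \sum_j (x j - x i) ^+ 2 = 2 * N%:R * X2 - 2 * S ^+ 2.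
Proof.
have inner i : \sum_j (x j - x i) ^+ 2 = X2 + N%:R * x i ^+ 2 - 2 * x i * S.
  rewrite (eq_bigr (fun j => x j ^+ 2 + x i ^+ 2 - 2 * x i * x j)); last by move=> j _; ring.
  rewrite sumrB big_split /= sumr_const card_ord -mulr_sumr /X2 /S; ring.
rewrite (eq_bigr _ (fun i _ => inner i)) sumrB big_split /= sumr_const card_ord.
rewrite -mulr_sumr -!mulr_suml /S /X2 -[\sum_(i < N) 2 * x i]mulr_sumr; ring.
Qed.

Lemma e2 : \sum_i \sum_j (a i j)%:R * (x j - x i) ^+ 2 = 2 * D - 2 * P.
Proof.
have inner i : \sum_j (a i j)%:R * (x j - x i) ^+ 2 =
   \sum_j (a i j)%:R * x j ^+ 2 + (gdeg i)%:R * x i ^+ 2 - 2 * \sum_j (a i j)%:R * (x i * x j).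
  rewrite degE mulr_suml mulr_sumr -big_split -sumrB /=; apply: eq_bigr => j _; ring.
rewrite (eq_bigr _ (fun i _ => inner i)) sumrB big_split /= -mulr_sumr.
rewrite exchange_big /=.
have -> : \sum_j \sum_i (a i j)%:R * x j ^+ 2 = D.
  apply: eq_bigr => j _; rewrite degE mulr_suml; apply: eq_bigr => i _; by rewrite asym.
by rewrite [2 * D]mulr_natl mulr2n.
Qed.

Lemma e3 : \sum_j x j * \sum_i x i * Lap i j = D - P.
Proof.
have inner j : x j * \sum_i x i * Lap i j =
   (gdeg j)%:R * x j ^+ 2 - \sum_i (a j i)%:R * (x j * x i).
  under eq_bigr do rewrite LapE.
  rewrite mulr_sumr.
  rewrite (eq_bigr (fun i => (i == j)%:R * ((gdeg j)%:R * x j ^+ 2) - (a j i)%:R * (x j * x i))).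
    by rewrite sumrB sum_delta.
  move=> i _; case: eqP => [->|_]; [rewrite airr | rewrite (asym j i)] => /=; ring.
by rewrite (eq_bigr _ (fun j _ => inner j)) sumrB.
Qed.
Definition cgr i j := (i != j) && ~~ a i j.

Lemma Q_id l : (forall j, \sum_i x i * Lap i j = l * x j) ->
  \sum_i \sum_j (cgr i j)%:R * (x j - x i) ^+ 2 = 2 * (N%:R - l) * X2 - 2 * S ^+ 2.
Proof.
move=> Hl.
have term i j : (cgr i j)%:R * (x j - x i) ^+ 2 = (x j - x i) ^+ 2 - (a i j)%:R * (x j - x i) ^+ 2.
  rewrite /cgr; case: eqP => [->|_] /=; first by rewrite airr subrr expr0n /= !mulr0 subrr.
  by case: (a i j) => /=; rewrite ?mul1r ?mul0r ?subrr ?subr0.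
under eq_bigr do under eq_bigr do rewrite term.
under eq_bigr do rewrite sumrB.
rewrite sumrB e1 e2.
have : \sum_j x j * \sum_i x i * Lap i j = D - P by exact: e3.
under eq_bigr do rewrite Hl.
have -> : \sum_j x j * (l * x j) = l * X2.
  rewrite /X2 mulr_sumr; apply: eq_bigr => j _; ring.
move=> HDP.
have -> : D = P + l * X2 by rewrite HDP; ring.
ring.
Qed.

Lemma S_zero l : (forall j, \sum_i x i * Lap i j = l * x j) -> l * S = 0.
Proof.
move=> Hl; rewrite /S mulr_sumr.
under eq_bigr do rewrite -Hl.
rewrite exchange_big /=.
by rewrite big1 // => i _; rewrite -mulr_sumr rowsum mulr0.
Qed.

Lemma Q_ge0 : 0 <= \sum_i \sum_j (cgr i j)%:R * (x j - x i) ^+ 2.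
Proof.
apply: sumr_ge0 => i _; apply: sumr_ge0 => j _.
by apply: mulr_ge0; [exact: ler0n | exact: sqr_ge0].
Qed.
End Spec.

Section Spec2.
Variable (R : rcfType) (N : nat) (a : 'I_N -> 'I_N -> bool).
Hypothesis asym : forall i j, a i j = a j i.
Hypothesis airr : forall i, a i i = false.

Lemma eig_hyp (v : 'rV[R]_N) l : v *m Lap R a = l *: v ->
  forall j, \sum_i v 0 i * Lap R a i j = l * v 0 j.
Proof. by move=> /matrixP H j; move: (H 0 j); rewrite !mxE. Qed.

Lemma X2_gt0 (v : 'rV[R]_N) : v != 0 -> 0 < \sum_i v 0 i ^+ 2.
Proof.
move=> vn0.
have [i vi] : exists i, v 0 i != 0.
  apply/existsP; apply: contraR vn0 => /existsPn H; apply/eqP/matrixP => r c.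
  by rewrite (ord1 r) mxE; move: (H c); rewrite negbK => /eqP.
rewrite (bigD1 i) //=; apply: ltr_pwDl; first by rewrite lt_def sqrf_eq0 vi sqr_ge0.
by apply: sumr_ge0 => j _; exact: sqr_ge0.
Qed.

Lemma eig_le (v : 'rV[R]_N) l : v *m Lap R a = l *: v -> v != 0 -> l <= N%:R.
Proof.
move=> /eig_hyp Hl vn0.
have [->|l0] := eqVneq l 0; first exact: ler0n.
have S0 : \sum_i v 0 i = 0.
  by move: (S_zero airr Hl) => /eqP; rewrite mulf_eq0 (negbTE l0) => /eqP.
have := Q_ge0 a (fun i => v 0 i); rewrite (Q_id asym airr Hl) S0 expr0n /= mulr0 subr0.
move=> H; have X2p := X2_gt0 vn0.
rewrite -subr_ge0; move: H; rewrite pmulr_lge0 ?pmulr_rge0 //.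
Qed.

Lemma eig_N_const (v : 'rV[R]_N) : v *m Lap R a = N%:R *: v -> (0 < N)%N ->
  (\sum_i v 0 i = 0) /\ forall i j, cgr a i j -> v 0 i = v 0 j.
Proof.
move=> /eig_hyp Hl N0.
have S0 : \sum_i v 0 i = 0.
  move: (S_zero airr Hl) => /eqP; rewrite mulf_eq0 pnatr_eq0 -[(N == 0)%N]negbK -lt0n N0 /=.
  by move/eqP.
split=> //.
have := Q_id asym airr Hl; rewrite S0 subrr mulr0 mul0r expr0n /= mulr0 subr0.
move/eqP; rewrite psumr_eq0 => [/allP H i j cij|i _]; last first.
  apply: sumr_ge0 => j _; apply: mulr_ge0; [exact: ler0n | exact: sqr_ge0].
move: (H i (mem_index_enum i)) => /=; rewrite psumr_eq0 => [/allP H2|k _]; last first.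
  apply: mulr_ge0; [exact: ler0n | exact: sqr_ge0].
move: (H2 j (mem_index_enum j)) => /=; rewrite cij mul1r sqrf_eq0 subr_eq0 => /eqP ->.
by [].
Qed.

Lemma eig_N_conn (v : 'rV[R]_N) : v *m Lap R a = N%:R *: v -> (0 < N)%N ->
  (forall i j, i != j -> cgr a i j \/ exists k, cgr a i k /\ cgr a k j) -> v = 0.
Proof.
move=> Hv N0 conn; have [S0 C] := eig_N_const Hv N0.
have const i j : v 0 i = v 0 j.
  have [->//|ij] := eqVneq i j.
  case: (conn i j ij) => [/C //|[k [/C -> /C ->]]] //.
have i0 : 'I_N by exists 0%N.
move: S0; under eq_bigr do rewrite (const _ i0).
rewrite sumr_const card_ord => /eqP; rewrite -mulr_natl mulf_eq0 pnatr_eq0 -[(N == 0)%N]negbK -lt0n N0 /= => /eqP vi0.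
apply/matrixP => r c; rewrite (ord1 r) mxE (const _ i0) vi0.
by [].
Qed.

Lemma eig_univ (u : 'I_N) : (1 < N)%N -> (forall j, j != u -> a u j) ->
  root (char_poly (Lap R a)) N%:R.
Proof.
move=> N1 Hu; rewrite -eigenvalue_root_char; apply/eigenvalueP.
have N0 : (0 < N)%N by apply: ltnW.
have Luj j : Lap R a u j = (j == u)%:R * N%:R - 1.
  rewrite mxE; have [uj|uj] := eqVneq u j; last first.
    by rewrite (Hu j) 1?eq_sym // mulr1n ?mul0r ?sub0r.
  rewrite mul1r.
  have -> : gdeg a u = N.-1.
    rewrite /gdeg -[in RHS](card_ord N) -(cardC1 u); apply: eq_card => k; rewrite !inE.
    by case: eqP => [->|/eqP /Hu ->]; rewrite ?airr.
  by rewrite -[in RHS](prednK N0) -natr1 addrK.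
exists (\row_j ((j == u)%:R * N%:R - 1)); last first.
  apply/eqP => /matrixP /(_ 0 u); rewrite !mxE eqxx mul1r => /eqP.
  by rewrite subr_eq0 pnatr_eq1; case: N N1 => [|[]].
apply/matrixP => r j; rewrite (ord1 r) !mxE.
under eq_bigr do rewrite mxE mulrBl mulrAC.
rewrite sumrB -mulr_suml (sum_delta (fun i => Lap R a i j)).
under eq_bigr do rewrite mul1r.
by rewrite colsum // subr0 Luj mulrC.
Qed.
End Spec2.

Section Max.
Variable R : rcfType.
Lemma bmax_le (s : seq R) (B : R) : 0 <= B -> (forall y, y \in s -> y <= B) ->
  \big[Num.max/0]_(y <- s) y <= B.
Proof.
move=> B0; elim: s => [|z s IH] H; first by rewrite big_nil.
rewrite big_cons ge_max H ?mem_head //= IH // => y ys; apply: H; rewrite in_cons ys orbT.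
by [].
Qed.

Lemma bmax_ge (s : seq R) y : y \in s -> y <= \big[Num.max/0]_(z <- s) z.
Proof.
elim: s => [|z s IH] //; rewrite in_cons big_cons le_max => /orP[/eqP ->|ys].
  by rewrite lexx.
by rewrite IH ?orbT.
Qed.

Lemma bmax_mem (s : seq R) : \big[Num.max/0]_(z <- s) z != 0 ->
  \big[Num.max/0]_(z <- s) z \in s.
Proof.
elim: s => [|z s IH]; first by rewrite big_nil eqxx.
rewrite big_cons in_cons; have [zm|mz] := leP z (\big[Num.max/0]_(z <- s) z).
  by move=> /IH ->; rewrite orbT.
by rewrite eqxx.
Qed.

Lemma in_rootsR (p : {poly R}) x : p != 0 -> (x \in rootsR p) = root p x.
Proof. by move=> /roots_on_rootsR H; rewrite -H in_itv. Qed.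
End Max.

Section Ideals.
Variable m : nat.
Local Notation n := m.+2.
Local Notation Z := 'Z_(m.+2).

Definition Id (d : nat) : {set Z} := [set x : Z | (d %| x)%N].

Lemma valZ (k : nat) : nat_of_ord (k%:R : Z) = (k %% n)%N.
Proof. by rewrite val_Zp_nat. Qed.

Lemma Zval (x : Z) : (nat_of_ord x)%:R = x.
Proof. exact: natr_Zp. Qed.

Lemma valZ_lt (x : Z) : (nat_of_ord x < n)%N.
Proof. by case: x. Qed.

Lemma nZ : (n%:R : Z) = 0.
Proof. by apply: ord_inj; rewrite valZ modnn. Qed.

Lemma dvd_modn d k : (d %| n)%N -> (d %| k %% n)%N = (d %| k)%N.
Proof.
move=> dn; rewrite [in RHS](divn_eq k n) dvdn_addr //; exact: dvdn_mull.
Qed.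

Lemma memId d k : (d %| n)%N -> ((k%:R : Z) \in Id d) = (d %| k)%N.
Proof. by move=> dn; rewrite inE valZ dvd_modn. Qed.

Lemma subZ (x y : Z) : x - y = ((nat_of_ord x + (n - nat_of_ord y))%N)%:R.
Proof.
rewrite natrD natrB; last by apply: ltnW; exact: valZ_lt.
by rewrite nZ sub0r !Zval.
Qed.

Lemma Id_ideal d : (d %| n)%N -> is_ideal (Id d).
Proof.
move=> dn; apply/and3P; split.
- by rewrite inE dvdn0.
- apply/forallP => x; apply/forallP => y; apply/implyP => /andP[].
  move: (memId (nat_of_ord x + (n - nat_of_ord y)) dn); rewrite -subZ inE => ->.
  rewrite !inE => dx dy; by apply: dvdn_add => //; apply: dvdn_sub.
- apply/forallP => r; apply/forallP => x; apply/implyP; rewrite !inE => dx.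
  by rewrite -(Zval r) -(Zval x) -natrM valZ dvd_modn // dvdn_mull.
Qed.

Section IdealI.
Variable I : {set Z}.
Hypothesis idI : is_ideal I.

Lemma ideal0 : 0 \in I.
Proof. by case/and3P: idI. Qed.

Lemma idealB x y : x \in I -> y \in I -> x - y \in I.
Proof.
case/and3P: idI => _ /forallP H _ xI yI.
by move: (H x) => /forallP /(_ y); rewrite xI yI.
Qed.

Lemma idealM r x : x \in I -> r * x \in I.
Proof.
case/and3P: idI => _ _ /forallP H xI.
by move: (H r) => /forallP /(_ x); rewrite xI.
Qed.

Lemma ideal_gcd a b : (a%:R : Z) \in I -> (b%:R : Z) \in I -> ((gcdn a b)%:R : Z) \in I.
Proof.
move=> aI bI; case: (posnP a) => [->|a0]; first by rewrite gcd0n.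
case: (egcdnP b a0) => km kn Hk _.
have -> : gcdn a b = (km * a - kn * b)%N by rewrite Hk addKn.
rewrite natrB; last by rewrite Hk leq_addr.
by rewrite !natrM; apply: idealB; apply: idealM.
Qed.

Definition gI := gcdn n (\big[gcdn/0]_(x in I) nat_of_ord x).

Lemma gI_mem : (gI%:R : Z) \in I.
Proof.
rewrite /gI; apply: ideal_gcd; first by rewrite nZ ideal0.
apply: (big_ind (fun g => (g%:R : Z) \in I)).
- by rewrite ideal0.
- by move=> g h; apply: ideal_gcd.
- by move=> x xI; rewrite Zval.
Qed.

Lemma gI_dvd : (gI %| n)%N.
Proof. exact: dvdn_gcdl. Qed.

Lemma gI_dvdx x : x \in I -> (gI %| nat_of_ord x)%N.
Proof.
move=> xI; apply: (dvdn_trans (dvdn_gcdr _ _)).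
by apply: (biggcdn_inf x) => //.
Qed.

Lemma ideal_Id : I = Id gI.
Proof.
apply/setP => x; rewrite inE; apply/idP/idP; first exact: gI_dvdx.
move=> dx; rewrite -(Zval x) -(divnK dx) natrM; apply: idealM; exact: gI_mem.
Qed.
End IdealI.
End Ideals.

Section Ideals2.
Variable m : nat.
Local Notation n := m.+2.
Local Notation Z := 'Z_(m.+2).

Lemma memId' d (x : Z) : (x \in Id m d) = (d %| nat_of_ord x)%N.
Proof. by rewrite inE. Qed.

Lemma dvd_pos d : (d %| n)%N -> (0 < d)%N.
Proof. by case: d => //; rewrite dvd0n. Qed.

Lemma Z_eq0 (x : Z) : (n %| nat_of_ord x)%N -> x = 0.
Proof.
move=> H; apply: ord_inj => /=; have lt := valZ_lt x.
move: H lt; case: (nat_of_ord x) => // k /dvdn_leq-/(_ isT) le lt.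
by rewrite leqNgt lt in le.
Qed.

Lemma Id_zero d : (d %| n)%N -> (Id m d == zero_ideal m.+2) = (d == n).
Proof.
move=> dn; have [->|dnn] := eqVneq d n.
  apply/eqP/setP => x; rewrite inE !inE; apply/idP/eqP => [/Z_eq0 //|->].
  by rewrite dvdn0.
apply/negbTE/eqP => E.
have : (d%:R : Z) \in zero_ideal m.+2 by rewrite -E memId // dvdnn.
rewrite inE => /eqP /(congr1 (@nat_of_ord _)); rewrite valZ modn_small /=.
  by move=> d0; move: (dvd_pos dn); rewrite d0.
by rewrite ltn_neqAle dnn dvdn_leq.
Qed.

Lemma Id_T d : (d %| n)%N -> (Id m d == setT) = (d == 1%N).
Proof.
move=> dn; have [->|d1] := eqVneq d 1%N.
  by apply/eqP/setP => x; rewrite !inE dvd1n.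
apply/negbTE/eqP => E.
have : (1%:R : Z) \in Id m d by rewrite E inE.
by rewrite memId // dvdn1 (negbTE d1).
Qed.

Lemma Id_dvd a b : (a %| n)%N -> (b %| n)%N -> Id m a = Id m b -> (a %| b)%N.
Proof.
move=> an bn E; have [->//|bnn] := eqVneq b n.
have : (b%:R : Z) \in Id m b by rewrite memId // dvdnn.
by rewrite -E memId.
Qed.

Lemma Id_inj a b : (a %| n)%N -> (b %| n)%N -> Id m a = Id m b -> a = b.
Proof.
move=> an bn E; apply/eqP; rewrite eqn_dvd (Id_dvd an bn E) (Id_dvd bn an (esym E)).
by [].
Qed.

Lemma vert_Id I : I \in EIG_vertices n -> exists2 d, ((d %| n) && (1 < d < n))%N & I = Id m d.
Proof.
rewrite inE => /and3P [idI I0 IT]; exists (gI I); last exact: ideal_Id.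
have dn := gI_dvd I; rewrite dn /=.
rewrite (ideal_Id idI) Id_zero // in I0; rewrite (ideal_Id idI) Id_T // in IT.
have := dvd_pos dn; have := dvdn_leq (ltn0Sn _) dn.
move: I0 IT; case: (gI I) => [|[|k]] //= H1 _ H2 _.
by rewrite ltn_neqAle H1 H2.
Qed.

Lemma Id_vert d : (d %| n)%N -> (1 < d)%N -> (d < n)%N -> Id m d \in EIG_vertices n.
Proof.
move=> dn d1 dlt; rewrite inE Id_ideal // Id_zero // Id_T //.
by rewrite (ltn_eqF dlt) (gtn_eqF d1).
Qed.

Lemma ess_of (J : {set Z}) :
  (forall x : Z, x != 0 -> exists r : Z, (r * x \in J) && (r * x != 0)) -> essential J.
Proof.
move=> H; apply/forallP => K; apply/implyP => /andP [idK Kn0].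
have [x /andP [xK x0]] : exists x, (x \in K) && (x != 0).
  apply/existsP; apply: contraR Kn0 => /existsPn H2; apply/eqP/setP => y.
  rewrite inE; apply/idP/eqP => [yK|->]; last exact: ideal0.
  by move: (H2 y); rewrite yK /= negbK => /eqP.
have [r /andP [rJ r0]] := H x x0.
apply/eqP => E; have : r * x \in J :&: K by rewrite inE rJ idealM.
by rewrite E inE (negbTE r0).
Qed.

Lemma not_ess (J : {set Z}) d : 0 \in J -> J \subset Id m d -> (d %| n)%N -> (1 < d)%N ->
  coprime d (n %/ d) -> ~~ essential J.
Proof.
move=> J0 JS dn d1 cop; apply/forallPn; exists (Id m (n %/ d)).
have en : (n %/ d %| n)%N by rewrite -{2}(divnK dn) dvdn_mulr.
rewrite negb_imply Id_ideal // Id_zero // negbK.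
have -> /= : (n %/ d == n)%N = false by apply: ltn_eqF; rewrite ltn_Pdiv.
apply/eqP/setP => x; rewrite !inE; apply/andP/eqP => [[xJ xe]|->]; last first.
  by rewrite J0 dvdn0.
apply: Z_eq0; move: (subsetP JS x xJ); rewrite inE => xd.
apply: (@dvdn_trans (d * (n %/ d))%N); first by rewrite mulnC divnK.
by rewrite Gauss_dvd // xd xe.
Qed.

Lemma sum_l (I K : {set Z}) y : y \in I -> 0 \in K -> y \in ideal_sum I K.
Proof. by move=> yI K0; apply/imset2P; exists y 0 => //; rewrite addr0. Qed.

Lemma sum_r (I K : {set Z}) y : y \in K -> 0 \in I -> y \in ideal_sum I K.
Proof. by move=> yK I0; apply/imset2P; exists 0 y => //; rewrite add0r. Qed.

Lemma sumC (I K : {set Z}) : ideal_sum I K = ideal_sum K I.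
Proof.
apply/setP => z; apply/imset2P/imset2P => [] [x y xI yK ->]; exists y x => //; exact: addrC.
Qed.

Lemma sum_sub a b : (a %| n)%N -> (b %| n)%N ->
  ideal_sum (Id m a) (Id m b) \subset Id m (gcdn a b).
Proof.
move=> an bn; apply/subsetP => z /imset2P [x y]; rewrite !inE => ax ay ->.
rewrite -(Zval x) -(Zval y) -natrD.
have gn : (gcdn a b %| n)%N by apply: dvdn_trans (dvdn_gcdl _ _) an.
move: (memId (nat_of_ord x + nat_of_ord y) gn); rewrite inE => ->.
by apply: dvdn_add; [apply: dvdn_trans ax; exact: dvdn_gcdl | apply: dvdn_trans ay; exact: dvdn_gcdr].
Qed.
End Ideals2.

Lemma size_add_divisors f divs : size (PrimeDecompAux.add_divisors f divs) = (f.2.+1 * size divs)%N.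
Proof.
case: f => p e; rewrite /PrimeDecompAux.add_divisors /=; elim: e => [|e IH] /=; first by rewrite mul1n.
by rewrite size_merge size_cat size_map IH mulSn addnC.
Qed.

Lemma size_divisors n : (0 < n)%N -> size (divisors n) = (\prod_(p <- primes n) (logn p n).+1)%N.
Proof.
move=> _; rewrite /divisors prime_decompE.
elim: (primes n) => [|p s IH]; first by rewrite big_nil.
rewrite big_cons -IH; exact: (size_add_divisors (p, logn p n) _).
Qed.

Section Count.
Variable m : nat.
Local Notation n := m.+2.
Local Notation Z := 'Z_(m.+2).

Definition Dv : {set 'I_n.+1} := [set d : 'I_n.+1 | [&& (d %| n)%N, (1 < d)%N & (d < n)%N]].

Lemma verts_eq : EIG_vertices n = (fun d : 'I_n.+1 => Id m d) @: Dv.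
Proof.
apply/setP => I; apply/idP/imsetP => [/vert_Id [d /andP [dn /andP [d1 d2]] ->]|[d]].
  have dl : (d < n.+1)%N by apply: ltnW; rewrite ltnS.
  by exists (Ordinal dl); rewrite // inE dn d1 d2.
by rewrite inE => /and3P [dn d1 d2] ->; apply: Id_vert.
Qed.

Lemma card_verts_Dv : #|EIG_vertices n| = #|Dv|.
Proof.
rewrite verts_eq card_in_imset // => x y; rewrite !inE => /and3P [xn _ _] /and3P [yn _ _] E.
by apply: val_inj; apply: (Id_inj xn yn E).
Qed.

Lemma card_A : #|[set d : 'I_n.+1 | (d %| n)%N]| = size (divisors n).
Proof.
rewrite cardE -(size_map val); apply: perm_size; apply: uniq_perm.
- by rewrite map_inj_uniq ?enum_uniq //; exact: val_inj.
- exact: divisors_uniq.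
move=> d; rewrite -dvdn_divisors //; apply/mapP/idP => [[x]|dn].
  by rewrite mem_enum inE => xn ->.
have dl : (d < n.+1)%N by rewrite ltnS dvdn_leq.
by exists (Ordinal dl); rewrite // mem_enum inE.
Qed.

Lemma card_Dv : #|Dv| = (size (divisors n) - 2)%N.
Proof.
rewrite -card_A.
have o1 : (1 < n.+1)%N by [].
have on : (n < n.+1)%N by [].
rewrite (cardsD1 (Ordinal o1)) (cardsD1 (Ordinal on)) !inE /= dvd1n dvdnn /=.
rewrite add1n add1n subn2 /=; apply: eq_card => d; rewrite !inE.
rewrite -!val_eqE /=; case: d => d dl /=.
case dn: (d %| n)%N; rewrite ?andbF ?andbT //=.
have := dvd_pos dn; move: dl; rewrite ltnS; lia.
Qed.
End Count.

Section Graph.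
Variable (R : rcfType) (m : nat).
Local Notation n := m.+2.
Local Notation Z := 'Z_(m.+2).
Local Notation V := (EIG_vertices n).
Local Notation Nv := (EIG_nv n).

Definition ga (i j : 'I_Nv) := EIG_adj (EIG_vertex i) (EIG_vertex j).

Lemma ga_sym i j : ga i j = ga j i.
Proof. by rewrite /ga /EIG_adj eq_sym sumC. Qed.

Lemma ga_irr i : ga i i = false.
Proof. by rewrite /ga /EIG_adj eqxx. Qed.

Lemma lap_eq : EIG_laplacian R n = Lap R ga.
Proof.
apply/matrixP => i j; rewrite !mxE; case: eqP => // _; congr (_%:R).
rewrite /EIG_deg /gdeg /ga.
rewrite -(card_imset _ (@enum_val_inj _ V)); apply: eq_card => K; rewrite inE.
apply/andP/imsetP => [[KV aK]|[k]].
  by exists (enum_rank_in KV K); rewrite ?inE /EIG_vertex enum_rankK_in.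
by rewrite inE => ak ->; rewrite enum_valP.
Qed.

Lemma b_eq : b_EIG R n = \big[Num.max/0]_(y <- rootsR (char_poly (Lap R ga))) y.
Proof. by rewrite /b_EIG /largest_eigenvalue lap_eq. Qed.

Lemma cp_neq0 : char_poly (Lap R ga) != 0.
Proof. exact: monic_neq0 (char_poly_monic _). Qed.

Lemma b_le : b_EIG R n <= Nv%:R.
Proof.
rewrite b_eq; apply: bmax_le; first exact: ler0n.
move=> y; rewrite in_rootsR ?cp_neq0 // -eigenvalue_root_char => /eigenvalueP [v Hv vn0].
exact: (eig_le ga_sym ga_irr Hv vn0).
Qed.

Lemma b_univ (u : {set Z}) : u \in V ->
  (forall K, K \in V -> K != u -> essential (ideal_sum u K)) -> (1 < Nv)%N ->
  b_EIG R n = Nv%:R.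
Proof.
move=> uV Hu N1; apply/eqP; rewrite eq_le b_le /= b_eq; apply: bmax_ge.
rewrite in_rootsR ?cp_neq0 //.
apply: (@eig_univ R _ ga ga_sym ga_irr (enum_rank_in uV u) N1) => j ju.
have neq : enum_val j != u.
  apply: contra ju => /eqP E; apply/eqP; apply: enum_val_inj; by rewrite enum_rankK_in.
rewrite /ga /EIG_adj /EIG_vertex enum_rankK_in // eq_sym neq /=.
by apply: Hu => //; exact: enum_valP.
Qed.

Lemma cgr_of i j : i != j -> ~~ essential (ideal_sum (EIG_vertex i) (EIG_vertex j)) -> cgr ga i j.
Proof. by move=> ij ne; rewrite /cgr ij /ga /EIG_adj (negbTE ne) andbF. Qed.

Lemma b_conn : (0 < Nv)%N ->
  (forall I K, I \in V -> K \in V -> I != K -> ~~ essential (ideal_sum I K) \/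
     exists W, [/\ W \in V, W != I, W != K, ~~ essential (ideal_sum I W) &
                   ~~ essential (ideal_sum W K)]) ->
  b_EIG R n != Nv%:R.
Proof.
move=> N0 Hc; apply/eqP => E.
have Nn0 : (Nv%:R : R) != 0 by rewrite pnatr_eq0 -lt0n.
have := bmax_mem (s := rootsR (char_poly (Lap R ga))); rewrite -b_eq E => /(_ Nn0).
rewrite in_rootsR ?cp_neq0 // -eigenvalue_root_char => /eigenvalueP [v Hv vn0].
move/eqP: vn0; apply; apply: (eig_N_conn ga_sym ga_irr Hv N0) => i j ij.
have vij : EIG_vertex i != EIG_vertex j.
  by apply: contra ij => /eqP E2; apply/eqP; apply: enum_val_inj.
case: (Hc _ _ (enum_valP i) (enum_valP j) vij) => [ne|[W [WV Wi Wj n1 n2]]].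
  by left; apply: cgr_of.
right; exists (enum_rank_in WV W).
have ki : i != enum_rank_in WV W.
  apply: contra Wi => /eqP ->; by rewrite /EIG_vertex enum_rankK_in.
have kj : enum_rank_in WV W != j.
  apply: contra Wj => /eqP <-; by rewrite /EIG_vertex enum_rankK_in.
split; apply: cgr_of => //; by rewrite /EIG_vertex enum_rankK_in.
Qed.
End Graph.

Section NT.
Local Open Scope nat_scope.

Lemma prod_pl n : 0 < n -> n = \prod_(p <- primes n) p ^ logn p n.
Proof. by move=> n0; rewrite {1}(prod_prime_decomp n0) prime_decompE big_map. Qed.

Lemma pdiv_in n : 1 < n -> pdiv n \in primes n.
Proof. by move=> n1; rewrite mem_primes pdiv_prime // pdiv_dvd ltnW. Qed.

Lemma primes_one n p : 0 < n -> primes n = [:: p] -> n = p ^ logn p n.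
Proof. by move=> n0 E; rewrite {1}(prod_pl n0) E big_seq1. Qed.

Lemma sq_dvd p n : prime p -> 0 < n -> (p ^ 2 %| n) = (2 <= logn p n).
Proof. by move=> pp n0; rewrite pfactor_dvdn. Qed.

Definition cond n := [\/ size (primes n) = 1 /\ (forall p, p \in primes n -> (2 < logn p n)),
         size (primes n) = 2 /\ (forall p, p \in primes n -> logn p n = 1)
       | (2 <= size (primes n)) /\ (exists2 p, p \in primes n & (1 < logn p n))].

Lemma condA n : 1 < n -> ~ (exists p, prime p /\ n = p ^ 2) ->
  (size (primes n) = 1 /\ (forall p, p \in primes n -> (2 < logn p n))) \/
  (2 <= size (primes n) /\ (exists2 p, p \in primes n & (1 < logn p n))) ->
  exists p, [/\ prime p, p ^ 2 %| n & p ^ 2 != n].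
Proof.
move=> n1 np2 [[k1 H]|[k2 [p pin lp]]].
  have pin := pdiv_in n1; have := H _ pin; set p := pdiv n => lp.
  have pp : prime p by move: pin; rewrite mem_primes => /andP [].
  exists p; split => //; first by rewrite sq_dvd ?(ltnW n1) // ltnW.
  apply/eqP => E; move: lp; rewrite -E pfactorK //.
have pp : prime p by move: pin; rewrite mem_primes => /andP [].
exists p; split => //; first by rewrite sq_dvd ?(ltnW n1).
apply/eqP => E; move: k2; rewrite -E primesX // primes_prime //.
Qed.

Lemma condB n : 1 < n -> size (primes n) = 2 -> (forall p, p \in primes n -> logn p n = 1) ->
  exists p q, [/\ prime p, prime q, p != q & n = p * q].
Proof.
move=> n1 k2 H; have := primes_uniq n; have := H; have : forall p, p \in primes n -> prime p.
  by move=> p; rewrite mem_primes => /andP [].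
have n0 : 0 < n by apply: ltnW.
have := prod_pl n0.
case: (primes n) k2 => [|p [|q [|]]] //= _ E Hp Hl.
rewrite inE andbT => pq; exists p, q; split => //.
- by apply: Hp; rewrite mem_head.
- by apply: Hp; rewrite !inE eqxx orbT.
rewrite E big_cons big_seq1 !Hl ?mem_head ?inE ?eqxx ?orbT //.
Qed.

Lemma notcond n : 1 < n -> ~~ prime n -> ~ (exists p, prime p /\ n = p ^ 2) -> ~ cond n ->
  (forall r, prime r -> ~~ (r ^ 2 %| n)) /\ 3 <= size (primes n).
Proof.
move=> n1 np np2 nc; have n0 : 0 < n by apply: ltnW.
have k1 : 0 < size (primes n) by case: (primes n) (pdiv_in n1).
have sqf : forall r, prime r -> ~~ (r ^ 2 %| n).
  move=> r rp; apply/negP => rn.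
  have rin : r \in primes n.
    by rewrite mem_primes rp n0 (dvdn_trans _ rn) // dvdn_exp.
  have lr : 1 < logn r n by rewrite -sq_dvd.
  have [k2|] := leqP 2 (size (primes n)).
    by apply: nc; apply: Or33; split=> //; exists r.
  rewrite ltnS => k1'.
  have E1 : primes n = [:: r].
    move: rin; case: (primes n) k1 k1' => [|s [|]] //= _ _; by rewrite inE => /eqP ->.
  have En := primes_one n0 E1.
  have [l2|l3] := leqP (logn r n) 2.
    by apply: np2; exists r; split => //; rewrite {1}En; congr (_ ^ _); apply/eqP; rewrite eqn_leq l2.
  apply: nc; apply: Or31; split; first by rewrite E1.
  by move=> p; rewrite E1 inE => /eqP ->.
split => //.
have lg1 : forall p, p \in primes n -> logn p n = 1.
  move=> p pin; have pp : prime p by move: pin; rewrite mem_primes => /andP [].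
  have := sqf p pp; rewrite sq_dvd // -ltnNge ltnS => le1.
  by apply/eqP; rewrite eqn_leq le1 logn_gt0.
have [k3|] := leqP 3 (size (primes n)) => // k2.
have [k1e|k2e] : size (primes n) = 1 \/ size (primes n) = 2.
  by move: k1 k2; case: (size (primes n)) => [|[|[|]]] //; auto.
  case E1 : (primes n) k1e => [|p [|]] //= _.
  have pp : prime p by have := mem_head p [::]; rewrite -E1 mem_primes => /andP [].
  by move: np; rewrite (primes_one n0 E1) lg1 ?E1 ?mem_head // expn1 pp.
by exfalso; apply: nc; apply: Or32; split.
Qed.
End NT.

Section Cases.
Variable (R : rcfType) (m : nat).
Local Notation n := m.+2.
Local Notation Z := 'Z_(m.+2).
Local Notation V := (EIG_vertices n).
Local Notation Nv := (EIG_nv n).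

Lemma p_dvd_sq p : (p %| p ^ 2)%N.
Proof. by rewrite (expnS p 1) expn1 dvdn_mulr. Qed.

Lemma mulZ_dvd (p : nat) (x : Z) : (p%:R * x == 0) -> (n %| p * nat_of_ord x)%N.
Proof.
rewrite -{1}(Zval x) -natrM => /eqP /(congr1 (@nat_of_ord _)); rewrite valZ /=.
by move/eqP; rewrite -/(dvdn n _).
Qed.

Lemma mulZ_in (p : nat) (x : Z) : (p %| n)%N -> p%:R * x \in Id m p.
Proof. by move=> pn; rewrite -(Zval x) -natrM memId // dvdn_mulr. Qed.

Lemma caseA p : prime p -> (p ^ 2 %| n)%N -> (p ^ 2 != n)%N -> b_EIG R n = Nv%:R.
Proof.
move=> pp p2n p2ne.
have p1 := prime_gt1 pp.
have pn : (p %| n)%N := dvdn_trans (p_dvd_sq p) p2n.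
have p2lt : (p ^ 2 < n)%N by rewrite ltn_neqAle p2ne dvdn_leq.
have plt : (p < p ^ 2)%N by rewrite (expnS p 1) expn1 ltn_Pmull // ltnW.
have uV : Id m p \in V by apply: Id_vert => //; apply: ltn_trans p2lt.
apply: (b_univ R uV).
  move=> K KV Ku; have idK : is_ideal K by move: KV; rewrite inE => /and3P [].
  apply: ess_of => x x0.
  have [px0|px0] := eqVneq (p%:R * x) 0.
    exists 1; rewrite mul1r x0 andbT; apply: sum_l; last exact: ideal0.
    rewrite inE -(@dvdn_pmul2l p) ?(ltnW p1) //; apply: (dvdn_trans _ (mulZ_dvd (introT eqP px0))).
    by rewrite mulnn.
  exists (p%:R); rewrite px0 andbT; apply: sum_l; last exact: ideal0.
  exact: mulZ_in.
apply/card_gt1P; exists (Id m p), (Id m (p ^ 2)); split => //.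
  by apply: Id_vert => //; rewrite (ltn_trans p1).
apply/eqP => /Id_inj E; have Ep := E pn p2n; by rewrite -Ep ltnn in plt.
Qed.

Lemma dvd_pq p q d : prime p -> prime q -> (d %| p * q)%N -> (1 < d)%N -> (d < p * q)%N ->
  d = p \/ d = q.
Proof.
move=> pp qp dpq d1 dlt.
have [pd|npd] := boolP (p %| d)%N.
  move: dpq dlt; rewrite -(divnK pd) mulnC dvdn_pmul2l ?prime_gt0 // => eq.
  case/primeP: qp => _ /(_ _ eq) /orP [/eqP ->|/eqP ->]; first by rewrite muln1; left.
  by rewrite ltnn.
have cp : coprime d p.
  by rewrite coprime_sym prime_coprime.
move: dpq; rewrite Gauss_dvdr // => dq.
case/primeP: qp => _ /(_ _ dq) /orP [/eqP d1'|/eqP ->]; last by right.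
by rewrite d1' in d1.
Qed.

Lemma caseB p q : prime p -> prime q -> p != q -> n = (p * q)%N -> b_EIG R n = Nv%:R.
Proof.
move=> pp qp pq npq.
have p1 := prime_gt1 pp; have q1 := prime_gt1 qp.
have pn : (p %| n)%N by rewrite npq dvdn_mulr.
have qn : (q %| n)%N by rewrite npq dvdn_mull.
have plt : (p < n)%N by rewrite npq ltn_Pmulr // ltnW.
have qlt : (q < n)%N by rewrite npq ltn_Pmull // ltnW.
have uV : Id m p \in V by apply: Id_vert.
have cpq : coprime p q by rewrite prime_coprime // dvdn_prime2 //.
apply: (b_univ R uV); last first.
  apply/card_gt1P; exists (Id m p), (Id m q); split => //; first exact: Id_vert.
  by apply/eqP => /Id_inj E; move: pq; rewrite (E pn qn) eqxx.
move=> K KV Ku; have [d /andP [dn /andP [d1 d2]] Kd] := vert_Id KV.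
have Kq : K = Id m q.
  have dn' : (d %| p * q)%N by rewrite -npq.
  have d2' : (d < p * q)%N by rewrite -npq.
  rewrite Kd; case: (dvd_pq pp qp dn' d1 d2') => E; rewrite E //.
  by move: Ku; rewrite Kd E eqxx.
rewrite Kq; apply: ess_of => x x0.
have [px0|px0] := eqVneq (p%:R * x) 0; last first.
  exists (p%:R); rewrite px0 andbT; apply: sum_l; last by rewrite inE dvdn0.
  exact: mulZ_in.
have [qx0|qx0] := eqVneq (q%:R * x) 0; last first.
  exists (q%:R); rewrite qx0 andbT; apply: sum_r; last by rewrite inE dvdn0.
  exact: mulZ_in.
exfalso; move/negP: x0; apply; apply/eqP; apply: Z_eq0.
have h1 := mulZ_dvd (introT eqP px0); have h2 := mulZ_dvd (introT eqP qx0).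
have h1' : (p * q %| p * nat_of_ord x)%N by rewrite -npq.
have h2' : (p * q %| q * nat_of_ord x)%N by rewrite -npq.
apply: (@dvdn_trans (p * q)%N); first by rewrite npq.
rewrite Gauss_dvd //; apply/andP; split.
  by move: h2'; rewrite mulnC dvdn_pmul2l // prime_gt0.
by move: h1'; rewrite dvdn_pmul2l // prime_gt0.
Qed.

Lemma nocop_of p x y : prime p -> (p %| x)%N -> (p %| y)%N -> ~~ coprime x y.
Proof.
move=> pp px py; apply/negP => /eqP g1; have := dvdn_gcd p x y; rewrite px py g1 dvdn1.
by move/eqP => p1; move: (prime_gt1 pp); rewrite p1.
Qed.

Hypothesis sqf : forall r, prime r -> ~~ (r ^ 2 %| n)%N.

Lemma sqf_cop d : (d %| n)%N -> coprime d (n %/ d).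
Proof.
move=> dn; apply: contraT => ncop.
have g0 : (0 < gcdn d (n %/ d))%N by rewrite gcdn_gt0 (dvd_pos dn).
have g1 : (1 < gcdn d (n %/ d))%N.
  by move: ncop g0; rewrite /coprime; case: (gcdn d (n %/ d)) => [|[|]].
have rp := pdiv_prime g1.
have r1 : (pdiv (gcdn d (n %/ d)) %| d)%N := dvdn_trans (pdiv_dvd _) (dvdn_gcdl _ _).
have r2 : (pdiv (gcdn d (n %/ d)) %| n %/ d)%N := dvdn_trans (pdiv_dvd _) (dvdn_gcdr _ _).
move: (sqf rp); rewrite -mulnn.
have -> : (pdiv (gcdn d (n %/ d)) * pdiv (gcdn d (n %/ d)) %| n)%N.
  by apply: (@dvdn_trans (d * (n %/ d))); [exact: dvdn_mul | rewrite mulnC divnK].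
by [].
Qed.

Lemma noness a b : (a %| n)%N -> (b %| n)%N -> ~~ coprime a b ->
  ~~ essential (ideal_sum (Id m a) (Id m b)).
Proof.
move=> an bn ncop.
have gn : (gcdn a b %| n)%N by apply: dvdn_trans (dvdn_gcdl _ _) an.
apply: (not_ess (d := gcdn a b)) => //.
- by apply: sum_l; rewrite inE dvdn0.
- exact: sum_sub.
- have g0 : (0 < gcdn a b)%N by rewrite gcdn_gt0 (dvd_pos an).
  by move: ncop g0; rewrite /coprime; case: (gcdn a b) => [|[|]].
- exact: sqf_cop.
Qed.

Lemma caseC : (3 <= size (primes n))%N -> b_EIG R n != Nv%:R.
Proof.
move=> k3; apply: b_conn.
  have n1 : (1 < n)%N by [].
  have pin := pdiv_in n1; set p := pdiv n in pin.
  have pp : prime p by move: pin; rewrite mem_primes => /andP [].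
  have pn : (p %| n)%N by move: pin; rewrite mem_primes => /and3P [].
  have plt : (p < n)%N.
    rewrite ltn_neqAle dvdn_leq // andbT; apply/eqP => E.
    by move: k3; rewrite -E primes_prime.
  apply/card_gt0P; exists (Id m p); apply: Id_vert => //; exact: prime_gt1.
move=> I K IV KV IK.
have [a /andP [an /andP [a1 a2]] Ia] := vert_Id IV.
have [b /andP [bn /andP [b1 b2]] Kb] := vert_Id KV.
rewrite Ia Kb.
case cop : (coprime a b); last by left; apply: noness => //; rewrite cop.
right.
have pp := pdiv_prime a1; have qp := pdiv_prime b1.
set p := pdiv a in pp; set q := pdiv b in qp.
have pa : (p %| a)%N := pdiv_dvd a.
have qb : (q %| b)%N := pdiv_dvd b.
have pn := dvdn_trans pa an; have qn := dvdn_trans qb bn.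
have pq : p != q.
  apply/eqP => E; have pb : (p %| b)%N by rewrite E.
  by move: cop; rewrite (negbTE (nocop_of pp pa pb)).
have : has (fun r => (r != p) && (r != q)) (primes n).
  apply/negPn/negP => /hasPn H.
  have : (size (primes n) <= size [:: p; q])%N.
    apply: uniq_leq_size (primes_uniq n) _ => r /H; rewrite negb_and !negbK.
    by case/orP => /eqP ->; rewrite !inE eqxx ?orbT.
  by rewrite leqNgt (leq_trans _ k3).
case/hasP => r rin /andP [rp rq].
have rpr : prime r by move: rin; rewrite mem_primes => /andP [].
have rn : (r %| n)%N by move: rin; rewrite mem_primes => /and3P [].
have cpq : coprime p q by rewrite prime_coprime // dvdn_prime2.
have cn : (p * q %| n)%N by rewrite Gauss_dvd // pn qn.
have c1 : (1 < p * q)%N.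
  by apply: leq_trans (prime_gt1 pp) (leq_pmulr p (prime_gt0 qp)).
have clt : (p * q < n)%N.
  rewrite ltn_neqAle dvdn_leq // andbT; apply/eqP => E.
  move: rn; rewrite -E Euclid_dvdM // !dvdn_prime2 //.
  by rewrite (negbTE rp) (negbTE rq).
have WV := Id_vert cn c1 clt.
exists (Id m (p * q)); split => //.
- apply/eqP => /Id_inj E; move: (E cn an) => Ea.
  by move: cop; rewrite (negbTE (nocop_of qp (_ : q %| a)%N qb)) // -Ea dvdn_mull.
- apply/eqP => /Id_inj E; move: (E cn bn) => Eb.
  by move: cop; rewrite (negbTE (nocop_of pp pa (_ : p %| b)%N)) // -Eb dvdn_mulr.
- by apply: noness => //; apply: (nocop_of pp pa); rewrite dvdn_mulr.
- by apply: noness => //; apply: (nocop_of qp _ qb); rewrite dvdn_mull.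
Qed.
End Cases.

Unset Implicit Arguments.
From Stdlib Require Classical_Prop.

Lemma two_le_div n : (1 < n)%N -> (2 <= size (divisors n))%N.
Proof.
move=> n1; have n0 : (0 < n)%N by apply: ltnW.
have : (size [:: 1%N; n] <= size (divisors n))%N.
  apply: uniq_leq_size; first by rewrite /= inE andbT; apply/eqP => E; rewrite -E in n1.
  move=> d; rewrite !inE => /orP [] /eqP ->; [exact: divisor1 | exact: divisors_id].
by [].
Qed.

Theorem mainTheorem15 (R : rcfType) (n : nat) :
  (1 < n)%N -> ~~ prime n -> ~ (exists p, prime p /\ n = (p ^ 2)%N) ->
  let k := size (primes n) in
  let T : R := (\prod_(p <- primes n) (logn p n).+1)%N%:R - 2 in
  b_EIG R n <= T /\
  (b_EIG R n = T <->
     [\/ k = 1%N /\ (forall p, p \in primes n -> (2 < logn p n)%N),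
         k = 2%N /\ (forall p, p \in primes n -> logn p n = 1%N)
       | (2 <= k)%N /\ (exists2 p, p \in primes n & (1 < logn p n)%N)]).
Proof.
case: n => [|[|m]] // n1 np np2 k T.
have TN : T = (EIG_nv m.+2)%:R.
  rewrite /T /EIG_nv card_verts_Dv card_Dv -size_divisors // natrB //; exact: two_le_div.
rewrite TN.
split; first exact: b_le.
split.
  move=> bE; apply: Classical_Prop.NNPP => nc.
  have [sqf k3] := notcond n1 np np2 nc.
  by move: (caseC R sqf k3); rewrite bE eqxx.
case => [[k1 H]|[k2 H]|[k2 H]].
- have [p [pp p2 p2n]] := condA n1 np2 (or_introl (conj k1 H)).
  exact: (caseA R pp p2 p2n).
- have [p [q [pp qp pq E]]] := condB n1 k2 H.
  exact: (caseB R pp qp pq E).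
- have [p [pp p2 p2n]] := condA n1 np2 (or_intror (conj k2 H)).
  exact: (caseA R pp p2 p2n).
Qed.
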